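(* For any lattice $L\subseteq\mathbb{R}^m$, if $C$ is a lattice code in $\mathbb{R}^m/L$, then $|C|\in N(L):=\{\|z\|_2^m:z\in\overline{L}\setminus\{0\}\}$.
   Context: A lattice is a discrete full-rank subgroup of $\mathbb{R}^m$; $\ell(L)$ is the smallest Euclidean norm of a nonzero vector of $L$ and $\overline{L}:=\ell(L)^{-1}\cdot L$. $\operatorname{CO}(m):=\{cQ:c>0,Q\in\operatorname{O}(m)\}$. A lattice code in $\mathbb{R}^m/L$ is a set $(TL)/L$ where $T\in\operatorname{CO}(m)$ is such that $L\subseteq TL$. *)

(* Defs.v *)
From HB Require Import structures.
From mathcomp Require Import all_boot all_order all_algebra.
From mathcomp Require Import all_classical all_reals.
Set Implicit Arguments. Unset Strict Implicit. Unset Printing Implicit Defensive.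
Import Order.TTheory GRing.Theory Num.Theory.
Local Open Scope classical_set_scope.
Local Open Scope ring_scope.

Definition norm2 {R : realType} {m : nat} (v : 'rV[R]_m) : R :=
  Num.sqrt (\sum_(i < m) v 0 i ^+ 2).

Definition is_lattice {R : realType} {m : nat} (L : set 'rV[R]_m) : Prop :=
  [/\ 0 \in L,
      (forall u v, u \in L -> v \in L -> u - v \in L),
      (exists2 r : R, 0 < r & forall v, v \in L -> norm2 v < r -> v = 0) &
      (exists B : 'M[R]_m, (forall i, row i B \in L) /\ B \in unitmx)].

Definition ell {R : realType} {m : nat} (L : set 'rV[R]_m) : R :=
  inf [set norm2 v | v in [set v | v \in L /\ v != 0]].

Definition Lbar {R : realType} {m : nat} (L : set 'rV[R]_m) : set 'rV[R]_m :=
  [set (ell L)^-1 *: v | v in L].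

Definition CO {R : realType} (m : nat) : set 'M[R]_m :=
  [set T | exists c : R, exists Q : 'M[R]_m,
     [/\ 0 < c, Q *m Q^T = 1%:M & T = c *: Q]].

Definition lin_image {R : realType} {m : nat} (T : 'M[R]_m) (L : set 'rV[R]_m)
  : set 'rV[R]_m := [set v *m T | v in L].

Definition quotient_set {R : realType} {m : nat} (M L : set 'rV[R]_m)
  : set (set 'rV[R]_m) := [set [set v + w | w in L] | v in M].

Definition lattice_code {R : realType} {m : nat} (L : set 'rV[R]_m)
  (C : set (set 'rV[R]_m)) : Prop :=
  exists2 T : 'M[R]_m, @CO R m T &
    L `<=` lin_image T L /\ C = quotient_set (lin_image T L) L.

Definition N_set {R : realType} {m : nat} (L : set 'rV[R]_m) : set R :=
  [set norm2 z ^+ m | z in [set z | z \in Lbar L /\ z != 0]].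

(* Main.v *)
Require Import Defs.
From mathcomp Require Import all_boot all_order all_algebra.
From mathcomp Require Import all_classical all_reals.
From mathcomp Require Import zify ring lra.
Import Order.TTheory GRing.Theory Num.Theory.
Local Open Scope ring_scope.
Set Implicit Arguments. Unset Strict Implicit. Unset Printing Implicit Defensive.

Lemma unitz_norm (x : int) : x \is a GRing.unit -> `|x| = 1.
Proof. by move=> /orP [] /eqP ->. Qed.

Lemma key_count m (Z : 'M[int]_m) : \det Z != 0 ->
  exists n : nat, exists rep : 'I_n -> 'rV[int]_m,
   [/\ (n%:Z = `|\det Z|)%R,
       (forall a : 'rV[int]_m, exists i, exists b, a - rep i = b *m Z) &
       (forall i j (b : 'rV[int]_m), rep i - rep j = b *m Z -> i = j)].
Proof.
move=> dZ.
case: (int_Smith_normal_form Z) => P uP [Rr uR [d _ eZ]].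
set D := \matrix_(i, j) _ in eZ.
have eD : D = diag_mx (\row_(i < m) d`_i).
  by apply/matrixP => i j; rewrite !mxE.
have detZ : \det Z = \det P * (\prod_(i < m) d`_i) * \det Rr.
  by rewrite eZ !det_mulmx eD det_diag; congr (_ * _ * _); apply: eq_bigr => i _; rewrite mxE.
have nP : `|\det P| = 1 by apply: unitz_norm; rewrite -unitmxE.
have nR : `|\det Rr| = 1 by apply: unitz_norm; rewrite -unitmxE.
have nZ : `|\det Z| = \prod_(i < m) `|d`_i|.
  by rewrite detZ !normrM nP nR mul1r mulr1 normr_prod.
have dn0 : forall i : 'I_m, d`_i != 0.
  move=> i; apply: contra dZ => /eqP di0; apply/eqP.
  by rewrite detZ (bigD1 i) //= di0 mul0r mulr0 mul0r.
pose dd (i : 'I_m) := absz d`_i.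
pose T := {dffun forall i : 'I_m, 'I_(dd i)}.
exists #|T|.
pose repD (k : 'I_#|T|) : 'rV[int]_m := \row_i ((enum_val k i : nat)%:Z).
exists (fun k => repD k *m Rr).
split.
- rewrite card_dep_ffun nZ foldrE big_map big_enum /=.
  rewrite (big_morph Posz PoszM (erefl 1%:Z)).
  apply: eq_bigr => i _; rewrite card_ord /dd. by rewrite abszE.
- move=> a.
  have [a' ea'] : exists a', a' = a *m invmx Rr by eexists.
  have hx : forall i : 'I_m, (absz (a' ord0 i %% d`_i)%Z < dd i)%N.
    move=> i; rewrite /dd -ltz_nat abszE ger0_norm ?modz_ge0 //; exact: ltz_mod.
  pose x : T := [ffun i => Ordinal (hx i)].
  exists (enum_rank x).
  exists ((\row_i (a' ord0 i %/ d`_i)%Z) *m invmx P).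
  rewrite eZ !mulmxA mulmxKV //.
  have -> : a = a' *m Rr by rewrite ea' mulmxKV.
  rewrite -mulmxBl; congr (_ *m _).
  rewrite eD mul_mx_diag.
  apply/rowP => j; rewrite !mxE enum_rankK ffunE /=.
  rewrite gez0_abs ?modz_ge0 //.
  by rewrite {1}(divz_eq (a' ord0 j) d`_j) addrK.
- move=> i j b e.
  have e' : repD i - repD j = (b *m P) *m diag_mx (\row_(i < m) d`_i).
    rewrite -eD; move: (congr1 (mulmx^~ (invmx Rr)) e).
    by rewrite -mulmxBl eZ !mulmxA !mulmxK.
  move: (b *m P) e' => bP e'.
  apply: enum_val_inj; apply/ffunP => k; apply: val_inj.
  move: (congr1 (fun X : 'rV[int]_m => X ord0 k) e'); rewrite mul_mx_diag !mxE.
  move=> h.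
  have lt1 := ltn_ord (enum_val i k); have lt2 := ltn_ord (enum_val j k).
  have hb : `|(enum_val i k : nat)%:Z - (enum_val j k : nat)%:Z| < `|d`_k|.
    move: lt1 lt2; rewrite /dd; set u := (enum_val i k : nat); set v := (enum_val j k : nat); move: u v => u v; rewrite -!abszE; lia.
  have c0 : bP ord0 k = 0.
    rewrite h normrM in hb; move: hb; move: (d`_k) (bP ord0 k) => dk c hb; nia.
  by move: h; rewrite c0 mul0r => /eqP; rewrite subr_eq0 => /eqP [].
Qed.


Definition grp {R : realType} {m : nat} (L : set 'rV[R]_m) :=
  0 \in L /\ (forall u v, u \in L -> v \in L -> u - v \in L).

Lemma grpN (R : realType) (m : nat) (L : set 'rV[R]_m) u : grp L -> u \in L -> - u \in L.
Proof. by case=> h0 hs hu; rewrite -sub0r; apply: hs. Qed.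

Lemma grpD (R : realType) (m : nat) (L : set 'rV[R]_m) u v : grp L -> u \in L -> v \in L -> u + v \in L.
Proof. by move=> g hu hv; rewrite -[v]opprK; apply: g.2 => //; apply: grpN. Qed.

Lemma grpMn (R : realType) (m : nat) (L : set 'rV[R]_m) u n : grp L -> u \in L -> u *+ n \in L.
Proof.
move=> g hu; elim: n => [|n ih]; first by rewrite mulr0n; exact: g.1.
by rewrite mulrS; apply: grpD.
Qed.

Lemma grpZ (R : realType) (m : nat) (L : set 'rV[R]_m) u (z : int) : grp L -> u \in L -> u *~ z \in L.
Proof.
move=> g hu; case: z => n; first exact: grpMn.
by rewrite NegzE mulrNz; apply: grpN => //; apply: grpMn.
Qed.

Lemma grp_sum (R : realType) (m : nat) (L : set 'rV[R]_m) (I : finType) (F : I -> 'rV[R]_m) :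
  grp L -> (forall i, F i \in L) -> \sum_i F i \in L.
Proof.
move=> g hF; apply: (big_ind (fun v => v \in L)) => //; first exact: g.1.
by move=> u v; apply: grpD.
Qed.

Lemma grp_comb (R : realType) (m : nat) k (L : set 'rV[R]_m) (B : 'M[R]_(k, m)) (a : 'rV[int]_k) :
  grp L -> (forall i, row i B \in L) -> map_mx intr a *m B \in L.
Proof.
move=> g hB; rewrite mulmx_sum_row; apply: grp_sum => // i.
by rewrite mxE scaler_int; apply: grpZ.
Qed.

Lemma norm2_le (R : realType) (m : nat) (v : 'rV[R]_m) b : 0 <= b -> (forall j, `|v 0 j| <= b) ->
  norm2 v <= m%:R * b.
Proof.
move=> b0 hb; rewrite /norm2.
have h1 : \sum_(i < m) v 0 i ^+ 2 <= (m%:R * b) ^+ 2.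
  apply: (@le_trans _ _ (\sum_(i < m) b ^+ 2)).
    apply: ler_sum => i _; rewrite -real_normK ?num_real //.
    by rewrite lerXn2r ?nnegrE ?normr_ge0.
  rewrite sumr_const card_ord -[b ^+ 2 *+ m]mulr_natl exprMn; apply: ler_wpM2r; first exact: sqr_ge0.
  rewrite -natrX ler_nat; nia.
apply: (le_trans (_ : _ <= Num.sqrt ((m%:R * b) ^+ 2))).
  by rewrite ler_sqrt ?sqr_ge0.
by rewrite sqrtr_sqr ger0_norm ?mulr_ge0.
Qed.

Lemma entry_bound (R : realType) (m : nat) (d : 'rV[R]_m) (B : 'M[R]_m) e :
  (forall i, `|d 0 i| <= e) -> forall j,
  `|(d *m B) 0 j| <= e * \sum_i \sum_j `|B i j|.
Proof.
move=> hd j; rewrite mxE; apply: (le_trans (ler_norm_sum _ _ _)).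
rewrite mulr_sumr; apply: ler_sum => i _; rewrite normrM.
have e0 : 0 <= e by apply: le_trans (hd i).
apply: (@le_trans _ _ (e * `|B i j|)); first by rewrite ler_wpM2r.
rewrite ler_wpM2l // (bigD1 j) //= lerDl sumr_ge0 //.
Qed.

Lemma rat_coords (R : realType) (m : nat) (L : set 'rV[R]_m) (B : 'M[R]_m) r :
  grp L -> 0 < r -> (forall v, v \in L -> norm2 v < r -> v = 0) ->
  (forall i, row i B \in L) -> B \in unitmx ->
  exists E : nat, (0 < E)%N /\ forall x, x \in L ->
    exists h : 'rV[int]_m, E%:R *: (x *m invmx B) = map_mx intr h.
Proof.
move=> g r0 hd hB uB.
set S := \sum_i \sum_j `|B i j|.
have S0 : 0 <= S by apply: sumr_ge0 => i _; apply: sumr_ge0.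
pose K := (Num.truncn (m%:R * S / r)).+1.
have hK : m%:R * S / r < K%:R by exact: truncnS_gt.
have Kp : 0 < K%:R :> R by rewrite ltr0n.
have small : forall d : 'rV[R]_m, (forall i, `|d 0 i| <= K%:R^-1) ->
    d *m B \in L -> d = 0.
  move=> d hdi hL.
  have : norm2 (d *m B) < r.
    apply: le_lt_trans (norm2_le (b := K%:R^-1 * S) _ _) _.
    - by rewrite mulr_ge0 // invr_ge0 ltW.
    - exact: entry_bound.
    by rewrite mulrCA ltr_pdivrMl // -ltr_pdivrMr.
  move=> /(hd _ hL) e0.
  by have := congr1 (mulmx^~ (invmx B)) e0; rewrite mulmxK // mul0mx.
pose N := #|{ffun 'I_m -> 'I_K}|.
exists N`!; split; first exact: fact_gt0.
move=> x hx.
have [y ey] : exists y, y = x *m invmx B by eexists.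
pose fl (j : nat) : 'rV[int]_m := \row_i Num.floor (j%:R * y 0 i).
pose fr (j : nat) : 'rV[R]_m := j%:R *: y - map_mx intr (fl j).
have fr01 : forall j i, 0 <= fr j 0 i < 1.
  move=> j i; rewrite !mxE; have := floor_itv (j%:R * y 0 i).
  rewrite intrD; move: (_%:~R) => u; lra.
have pc : forall j i, (Num.truncn (K%:R * fr j ord0 i) < K)%N.
  move=> j i; have := fr01 j i => /andP [h1 h2].
  rewrite truncn_lt_nat ?mulr_ge0 ?ler0n //.
  by rewrite -[X in _ < X]mulr1 ltr_pM2l.
pose code (j : 'I_N.+1) : {ffun 'I_m -> 'I_K} := [ffun i => Ordinal (pc j i)].
have [j1 [j2 [ne ec]]] : exists j1 j2 : 'I_N.+1, j1 != j2 /\ code j1 = code j2.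
  case: (pselect (injective code)) => [inj|ninj].
    by have := leq_card _ inj; rewrite card_ord ltnn.
  move: ninj => /existsNP [j1 /existsNP [j2 /not_implyP [e ne]]].
  by exists j1, j2; split => //; apply/eqP.
have dfr : forall i, `|(fr j1 - fr j2) 0 i| <= K%:R^-1.
  move=> i; have := congr1 (fun f : {ffun 'I_m -> 'I_K} => (f i : nat)) ec.
  rewrite !ffunE /= => et.
  have -> : (fr j1 - fr j2) 0 i = fr j1 0 i - fr j2 0 i by rewrite !mxE.
  have := fr01 j1 i; have := fr01 j2 i.
  move: (fr j1 0 i) (fr j2 0 i) et => a b et /andP [b0 b1] /andP [a0 a1].
  have := truncn_itv (x := K%:R * a) (mulr_ge0 (ler0n _ _) a0).
  have := truncn_itv (x := K%:R * b) (mulr_ge0 (ler0n _ _) b0).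
  rewrite et; move: (Num.truncn _) => t.
  rewrite -natr1 => /andP [h1 h2] /andP [h3 h4].
  rewrite -[K%:R^-1]mulr1 ler_pdivlMl // -[X in X * _]ger0_norm ?ltW // -normrM.
  rewrite mulrBr ltr_norml; apply/andP; split; lra.
have eB : forall j : nat, fr j *m B = x *+ j - map_mx intr (fl j) *m B.
  by move=> j; rewrite mulmxBl -scalemxAl ey mulmxKV // scaler_nat.
have inL : (fr j1 - fr j2) *m B \in L.
  rewrite mulmxBl !eB; apply: g.2; apply: g.2; rewrite ?grpMn ?grp_comb //.
have e0 := small _ dfr inL.
pose gz : int := (j1 : nat)%:Z - (j2 : nat)%:Z.
have eg0 : j1%:R *: y - j2%:R *: y = map_mx intr (fl j1) - map_mx intr (fl j2).
  move/eqP: e0; rewrite subr_eq0 => /eqP; rewrite /fr.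
  move: (j1%:R *: y) (j2%:R *: y) (map_mx intr (fl j1)) (map_mx intr (fl j2)) => c d a b e.
  by rewrite -[c](subrK a) e addrC addrA addKr addrC.
have eg : y *~ gz = map_mx intr (fl j1 - fl j2).
  by rewrite [RHS]raddfB /= -eg0 /gz mulrzBl_nat -!pmulrn !scaler_nat.
have gpos : (0 < absz gz <= N)%N.
  have := ltn_ord j1; have := ltn_ord j2; move: ne; rewrite /gz -val_eqE /=.
  move: (j1 : nat) (j2 : nat) => u v; lia.
have /dvdnP [q eq] := dvdn_fact gpos.
exists ((fl j1 - fl j2) *~ (q%:Z * sgz gz)).
rewrite raddfMz /= -eg -mulrzA (mulrC gz) -mulrA -abszEsg -PoszM -eq.
by rewrite -pmulrn scaler_nat ey.
Qed.


Lemma lattice_basis (R : realType) (m : nat) (L : set 'rV[R]_m) :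
  is_lattice L -> exists W : 'M[R]_m, W \in unitmx /\
    (forall v, v \in L <-> exists a : 'rV[int]_m, v = map_mx intr a *m W).
Proof.
case=> h0 hs [r r0 hd] [B [hB uB]].
have g : grp L by split.
have [E [E0 hE]] := rat_coords g r0 hd hB uB.
have En0 : E%:R != 0 :> R by rewrite pnatr_eq0 -lt0n.
pose phi (h : 'rV[int]_m) : 'rV[R]_m := (E%:R^-1 *: map_mx intr h) *m B.
have phiM : forall k (a : 'rV[int]_k) (M : 'M[int]_(k, m)),
    phi (a *m M) = map_mx intr a *m (E%:R^-1 *: map_mx intr M *m B).
  by move=> k a M; rewrite /phi map_mxM mulmxA -scalemxAr.
have phiB : forall h h', phi (h - h') = phi h - phi h'.
  by move=> h h'; rewrite /phi raddfB scalerBr mulmxBl.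
have phiE : forall h : 'rV[int]_m, phi (h *~ E) = map_mx intr h *m B.
  move=> h; rewrite /phi raddfMz -scaler_int scalerA mulrC.
  by rewrite -[(Posz E)%:~R]/(E%:R) mulfV // scale1r.
pose N' := #|{ffun 'I_m -> 'I_E}|.
pose cv (c : {ffun 'I_m -> 'I_E}) : 'rV[int]_m := \row_i ((c i : nat)%:Z).
pose gen c : 'rV[int]_m := if phi (cv c) \in L then cv c else 0.
pose K : 'M[int]_(m + N', m) := col_mx (E%:Z)%:M (\matrix_(k < N') gen (enum_val k)).
pose B' := E%:R^-1 *: map_mx intr K *m B.
have rowB' : forall i, row i B' = phi (row i K).
  move=> i; rewrite rowE (rowE i K) phiM; congr (_ *m _).
  by apply/matrixP => a b; rewrite !mxE; case: (_ && _); rewrite ?rmorph1 ?rmorph0.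
have hB' : forall i, row i B' \in L.
  move=> i; rewrite rowB'; case: (split_ordP i) => j ->.
    rewrite rowKu rowE mul_mx_scalar -[X in phi (X *: _)]intz scaler_int phiE.
    have -> : map_mx intr (delta_mx 0 j : 'rV[int]_m) = delta_mx 0 j :> 'rV[R]_m.
      by apply/matrixP => a b; rewrite !mxE; case: (_ && _); rewrite ?rmorph1 ?rmorph0.
    by rewrite -rowE.
  rewrite rowKd rowK /gen; case: ifP => // _.
  by rewrite /phi raddf0 scaler0 mul0mx.
have inK : forall a : 'rV[int]_(m + N'), phi (a *m K) \in L.
  by move=> a; rewrite phiM; apply: grp_comb.
have exK : forall x, x \in L -> exists a : 'rV[int]_(m + N'), x = phi (a *m K).
  move=> x hx; have [h eh] := hE x hx.
  have xphi : x = phi h.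
    by rewrite /phi -eh scalerA mulVf // scale1r mulmxKV.
  pose q := \row_i ((h ord0 i) %/ E)%Z; pose rm := \row_i ((h ord0 i) %% E)%Z.
  have hqr : h = q *~ E + rm.
    by apply/rowP => i; rewrite !mxE -pmulrn mulmxnE !mxE pmulrn mulrzz -divz_eq.
  have rbound : forall i, (absz (rm ord0 i) < E)%N.
    move=> i; rewrite mxE.
    have Ez : (E : int) != 0 by move: E0; lia.
    have h1 := modz_ge0 (h ord0 i) Ez.
    have h2 := ltz_mod (h ord0 i) Ez.
    move: h1 h2; move: (_ %% _)%Z => z; lia.
  pose c : {ffun 'I_m -> 'I_E} := [ffun i => Ordinal (rbound i)].
  have ecv : cv c = rm.
    apply/rowP => i; rewrite mxE ffunE /= abszE ger0_norm // mxE modz_ge0 //.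
    by rewrite -lt0n.
  have inr : phi rm \in L.
    have -> : rm = h - q *~ E by rewrite hqr (addrC (q *~ E)) addrK.
    by rewrite phiB phiE -xphi; apply: hs => //; apply: (grp_comb q g hB).
  have egen : gen c = rm by rewrite /gen ecv inr.
  exists (row_mx q (delta_mx 0 (enum_rank c))).
  rewrite mul_row_col mul_mx_scalar -rowE rowK enum_rankK egen.
  by rewrite -[X in phi (X *: _ + _)]intz scaler_int -hqr.
have [P0 uP0 [R0 uR0 [d _ eK]]] := int_Smith_normal_form K.
pose D' : 'M[int]_m := \matrix_(i, j) (d`_i *+ (i == j :> nat)).
have eD0 : (\matrix_(i < m + N', j < m) (d`_i *+ (i == j :> nat)) : 'M[int]_(m + N', m)) = col_mx D' 0.
  apply/matrixP => i j; case: (split_ordP i) => i' ->.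
    by rewrite col_mxEu !mxE.
  rewrite col_mxEd !mxE; case: eqP => // /= e.
  by have := ltn_ord j; rewrite -e /= ltnNge leq_addr.
rewrite eD0 in eK.
pose W := E%:R^-1 *: map_mx intr (D' *m R0) *m B.
have memL : forall v, v \in L <-> exists a : 'rV[int]_m, v = map_mx intr a *m W.
  move=> v; split.
    move=> /exK [a ->]; exists (lsubmx (a *m P0)).
    rewrite /W -phiM eK !mulmxA -[a *m P0]hsubmxK mul_row_col mulmx0 addr0.
    by rewrite hsubmxK.
  move=> [a ->]; rewrite /W -phiM.
  have -> : a *m (D' *m R0) = (row_mx a 0 *m invmx P0) *m K.
    by rewrite eK !mulmxA mulmxKV // mul_row_col mulmx0 addr0.
  exact: inK.
have uW : W \in unitmx.
  have /fin_all_exists [Y hY] : forall i : 'I_m, exists a : 'rV[int]_m,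
      row i B = map_mx intr a *m W by move=> i; apply/memL.
  have eB : B = map_mx intr (\matrix_i Y i) *m W.
    apply/row_matrixP => i; rewrite row_mul hY; congr (_ *m _).
    by apply/rowP => j; rewrite !mxE.
  move: uB; rewrite eB !unitmxE det_mulmx unitrM => /andP [].
  by [].
by exists W.
Qed.


Lemma coord_le_norm2 (R : realType) (m : nat) (v : 'rV[R]_m) j : `|v 0 j| <= norm2 v.
Proof.
rewrite /norm2 -(sqrtr_sqr (v 0 j)) ler_sqrt; last by apply: sumr_ge0 => i _; apply: sqr_ge0.
by rewrite (bigD1 j) //= lerDl sumr_ge0 // => i _; apply: sqr_ge0.
Qed.

Lemma min_vec (R : realType) (m : nat) (L : set 'rV[R]_m) (W : 'M[R]_m) :
  (0 < m)%N -> W \in unitmx ->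
  (forall v, v \in L <-> exists a : 'rV[int]_m, v = map_mx intr a *m W) ->
  exists v, [/\ v \in L, v != 0 & forall w, w \in L -> w != 0 -> norm2 v <= norm2 w].
Proof.
move=> m0 uW memL.
pose i0 : 'I_m := Ordinal m0.
pose w0 := row i0 W.
have dlt : map_mx intr (delta_mx 0 i0 : 'rV[int]_m) = delta_mx 0 i0 :> 'rV[R]_m.
  by apply/matrixP => a b; rewrite !mxE; case: (_ && _); rewrite ?rmorph1 ?rmorph0.
have w0L : w0 \in L by apply/memL; exists (delta_mx 0 i0); rewrite dlt -rowE.
have w0n0 : w0 != 0.
  apply/eqP => e; have := congr1 (fun X => X *m invmx W) e.
  rewrite /w0 rowE mulmxK // mul0mx => /matrixP /(_ 0 i0); rewrite !mxE !eqxx /=.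
  by move/eqP; rewrite oner_eq0.
set rho := norm2 w0.
set S := \sum_i \sum_j `|invmx W i j|.
have rho0 : 0 <= rho by rewrite /rho /norm2 sqrtr_ge0.
pose M := Num.truncn (rho * S).
have bnd : forall v, v \in L -> norm2 v <= rho -> exists a : 'rV[int]_m,
    v = map_mx intr a *m W /\ forall i, `|a ord0 i| <= M%:Z.
  move=> v /memL [a ea] hv; exists a; split => // i.
  have ea' : map_mx intr a = v *m invmx W by rewrite ea mulmxK.
  have h1 : `|(v *m invmx W) ord0 i| <= rho * S.
    by apply: entry_bound => j; apply: le_trans hv; apply: coord_le_norm2.
  rewrite -ea' mxE in h1.
  have h2 : rho * S < M.+1%:R by apply: truncnS_gt.
  have h3 : `|a ord0 i|%:~R < M.+1%:R :> R.
    by rewrite intr_norm; apply: le_lt_trans h2.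
  have h4 : `|a ord0 i| < (M.+1)%:Z by rewrite -(ltr_int R); exact: h3.
  lia.
pose vec (c : {ffun 'I_m -> 'I_(M + M).+1}) : 'rV[R]_m :=
  map_mx intr (\row_i ((c i : nat)%:Z - M%:Z)) *m W.
have code : forall v, v \in L -> norm2 v <= rho ->
    exists c, vec c = v.
  move=> v hL hv; have [a [ea ha]] := bnd v hL hv.
  have hc : forall i, (absz (a ord0 i + M%:Z)%R < (M + M).+1)%N.
    by move=> i; have := ha i; lia.
  exists [ffun i => Ordinal (hc i)]; rewrite /vec ea; congr (_ *m _).
  congr (map_mx _ _); apply/rowP => i; rewrite !mxE ffunE /=.
  have := ha i; rewrite -[a 0 i]/(a ord0 i); move: (a ord0 i) => z; lia.
have [c0 ec0] := code w0 w0L (lexx _).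
have Pc0 : vec c0 != 0 by rewrite ec0.
case: (@arg_minP _ _ _ c0 (fun c => vec c != 0) (fun c => norm2 (vec c)) Pc0) => cm Pcm hmin.
exists (vec cm); split => //.
  by apply/memL; eexists.
move=> w wL wn0; case: (lerP (norm2 w) rho) => hw.
  have [c ec] := code w wL hw; rewrite -ec; apply: hmin; by rewrite ec.
apply: le_trans (ltW hw); rewrite /rho -ec0; apply: hmin => //.
Qed.

Local Open Scope classical_set_scope.

Lemma zv_inj (R : realType) k m (A B : 'M[int]_(k, m)) :
  map_mx (intr : int -> R) A = map_mx intr B -> A = B.
Proof.
move=> e; apply/matrixP => i j; move/matrixP: e => /(_ i j); rewrite !mxE.
by move/eqP; rewrite eqr_int => /eqP.
Qed.

Lemma norm2_sq (R : realType) m (v : 'rV[R]_m) : \sum_i v 0 i ^+ 2 = (v *m v^T) 0 0.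
Proof. by rewrite mxE; apply: eq_bigr => i _; rewrite mxE expr2. Qed.

Lemma norm2_orth (R : realType) m (v : 'rV[R]_m) (Q : 'M[R]_m) :
  Q *m Q^T = 1%:M -> norm2 (v *m Q) = norm2 v.
Proof.
by move=> QQ; rewrite /norm2 !norm2_sq trmx_mul mulmxA -(mulmxA v) QQ mulmx1.
Qed.

Lemma norm2Z (R : realType) m (v : 'rV[R]_m) k : norm2 (k *: v) = `|k| * norm2 v.
Proof.
rewrite /norm2 -sqrtr_sqr -sqrtrM ?sqr_ge0 // mulr_sumr; congr Num.sqrt.
by apply: eq_bigr => i _; rewrite mxE exprMn.
Qed.

Lemma norm2_gt0 (R : realType) m (v : 'rV[R]_m) : v != 0 -> 0 < norm2 v.
Proof.
move=> vn0; have [j hj] : exists j, v 0 j != 0.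
  case: (pselect (exists j, v 0 j != 0)) => // hn; move/eqP: vn0; case.
  apply/rowP => j; rewrite mxE; apply/eqP/negPn/negP => hj; apply: hn; exists j.
  exact: hj.
by apply: lt_le_trans (coord_le_norm2 v j); rewrite normr_gt0.
Qed.

Lemma coset_eq (R : realType) m (L : set 'rV[R]_m) v v' : grp L -> v - v' \in L ->
  [set v + w | w in L] = [set v' + w | w in L].
Proof.
move=> g h; apply/seteqP; split => x [w wL <-].
  exists (v - v' + w); first by rewrite -in_setE; apply: grpD => //; rewrite in_setE.
  by rewrite addrA (addrC v') subrK.
exists (v' - v + w).
  rewrite -in_setE; apply: grpD => //; last by rewrite in_setE.
  by rewrite -opprB; apply: grpN.
by rewrite addrA (addrC v) subrK.
Qed.

Unset Implicit Arguments.
Local Open Scope ring_scope.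

Theorem lemma4p7 (R : realType) (m : nat) (L : set 'rV[R]_m)
    (C : set (set 'rV[R]_m)) :
  (0 < m)%N -> is_lattice L -> lattice_code L C ->
  exists n : nat, (C #= `I_n)%card /\ (n%:R : R) \in N_set L.
Proof.
move=> m0 hL [T hT [hsub eC]].
have [W [uW memL]] := lattice_basis hL.
have g : grp L by case: hL.
case: hT => c [Q [c0 QQ eT]].
have QtQ : Q^T *m Q = 1%:M by apply: mulmx1C.
have cn0 : c != 0 by rewrite gt_eqF.
have TiT : T *m (c^-1 *: Q^T) = 1%:M.
  by rewrite eT -scalemxAr -scalemxAl scalerA mulVf // scale1r QQ.
have uT : T \in unitmx := (mulmx1_unit TiT).1.
have invT : invmx T = c^-1 *: Q^T by rewrite -[invmx T]mulmx1 -TiT mulmxA mulVmx // mul1mx.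
have /fin_all_exists [Yf hY] : forall i : 'I_m, exists a : 'rV[int]_m,
    row i W = map_mx intr a *m W *m T.
  move=> i.
  have : row i W \in L.
    apply/memL; exists (delta_mx 0 i); rewrite rowE; congr (_ *m _).
    by apply/matrixP => a b; rewrite !mxE; case: (_ && _); rewrite ?rmorph1 ?rmorph0.
  rewrite in_setE => /hsub [u uL eu].
  have [a ea] : exists a : 'rV[int]_m, u = map_mx intr a *m W by apply/memL; rewrite in_setE.
  by exists a; rewrite -eu ea.
pose Y : 'M[int]_m := \matrix_i Yf i.
have eW : W = map_mx intr Y *m W *m T.
  apply/row_matrixP => i; rewrite !row_mul hY; congr (_ *m _ *m _).
  by apply/rowP => j; rewrite !mxE.
have dW : \det W != 0 by rewrite -unitfE -unitmxE.
have detT : \det T = c ^+ m * \det Q by rewrite eT detZ.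
have nQ : `|\det Q| = 1.
  have : \det Q ^+ 2 = 1 by rewrite expr2 -{2}det_tr -det_mulmx QQ det1.
  by move/eqP; rewrite sqr_norm_eq1 => /eqP.
have dY : (\det Y)%:~R * \det T = 1 :> R.
  have e := congr1 determinant eW; rewrite !det_mulmx det_map_mx in e.
  by apply: (mulIf dW); rewrite mul1r [RHS]e mulrAC.
have nY : `|(\det Y)%:~R| = (c ^+ m)^-1 :> R.
  have := congr1 Num.norm dY; rewrite normrM normr1 detT normrM nQ mulr1.
  rewrite [`|c ^+ m|]ger0_norm ?exprn_ge0 ?ltW // => h.
  by apply: (mulIf (expf_neq0 m cn0)); rewrite h mulVf // expf_neq0.
have dYn0 : \det Y != 0.
  by apply/eqP => e; move: dY; rewrite e mul0r => /esym/eqP; rewrite oner_eq0.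
have [n [rep [hn hsurj hinj]]] := key_count dYn0.
have nR : n%:R = (c ^+ m)^-1 :> R by rewrite -nY -intr_norm -hn.
pose f (k : 'I_n) := [set (map_mx intr (rep k) *m W *m T) + w | w in L].
have memL' : forall a : 'rV[int]_m, L (map_mx intr a *m W).
  by move=> a; rewrite -in_setE; apply/memL; exists a.
have hf : C = f @` setT.
  rewrite eC; apply/seteqP; split.
    move=> X [v [u uL <-] <-].
    have [a ea] : exists a : 'rV[int]_m, u = map_mx intr a *m W.
      by apply/memL; rewrite in_setE.
    have [i [b eb]] := hsurj a.
    exists i => //; rewrite /f; apply: coset_eq => //.
    have -> : map_mx intr (rep i) *m W *m T - u *m T =
        - (map_mx intr (a - rep i) *m W *m T).
      by rewrite ea raddfB !mulmxBl opprB.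
    rewrite eb map_mxM -(mulmxA _ (map_mx _ Y)) -(mulmxA _ (map_mx _ Y *m W)).
    rewrite -eW; apply: grpN => //.
    by rewrite in_setE.
  move=> X [k _ <-]; exists (map_mx intr (rep k) *m W *m T) => //.
  by exists (map_mx intr (rep k) *m W).
have hinjf : {in setT &, injective f}.
  move=> i j _ _ e.
  have : (map_mx intr (rep i) *m W *m T) \in f j.
    rewrite -e in_setE; exists 0; last by rewrite addr0.
    by rewrite -in_setE; exact: g.1.
  rewrite in_setE => -[w wL ew].
  have [b eb] : exists b : 'rV[int]_m, w = map_mx intr b *m W.
    by apply/memL; rewrite in_setE.
  apply: (hinj i j b); apply: (zv_inj (R := R)).
  have uWT : W *m T \in unitmx by rewrite unitmx_mul uW.
  apply: (can_inj (mulmxK uWT)) => /=.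
  rewrite raddfB /= mulmxBl map_mxM -[RHS]mulmxA (mulmxA (map_mx _ Y) W T) -eW -eb.
  by rewrite !mulmxA -ew addrC addKr.
exists n; split.
  by rewrite hf; apply: card_eq_trans (inj_card_eq hinjf) (card_esym card_II).
have [v0 [v0L v0n0 v0min]] := min_vec m0 uW memL.
have ellE : ell L = norm2 v0.
  rewrite /ell; set S := [set norm2 v | v in _].
  have v0S : S (norm2 v0) by exists v0.
  have lb : lbound S (norm2 v0).
    by move=> y [w [wL wn0] <-]; apply: v0min.
  apply/eqP; rewrite eq_le; apply/andP; split.
    by apply: (ge_inf (ex_intro _ _ lb)).
  by apply: lb_le_inf => //; exists (norm2 v0).
have [u0 u0L eu0] : lin_image T L v0 by apply: hsub; rewrite -in_setE.
have nu0 : norm2 v0 = c * norm2 u0.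
  by rewrite -eu0 eT -scalemxAr norm2Z norm2_orth // ger0_norm // ltW.
have ell0 : 0 < ell L by rewrite ellE norm2_gt0.
rewrite in_setE; exists ((ell L)^-1 *: u0).
  split; last by rewrite scaler_eq0 negb_or invr_eq0 gt_eqF //=; apply: contra v0n0 => /eqP u00; rewrite -eu0 u00 mul0mx.
  by rewrite in_setE; exists u0.
have u0n0 : u0 != 0 by apply: contra v0n0 => /eqP u00; rewrite -eu0 u00 mul0mx.
rewrite norm2Z ger0_norm ?invr_ge0 ?ltW // nR -exprVn; congr (_ ^+ _).
rewrite ellE nu0 invfM -mulrA mulVf ?mulr1 //.
by rewrite gt_eqF // norm2_gt0.
Qed.
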